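(* Let $\mathcal{P}_1,\dots,\mathcal{P}_k$ be finite posets with $p_j=|\mathcal{P}_j|$ and assume that $\mathcal{C}(\mathcal{P}_j)$ is simplicial for every $j=1,\dots,k$. For each $j$ let $\mathbf{A}^{(j)}\in\mathrm{GL}(p_j)$ be an invertible linear map with $\mathbf{A}^{(j)}(\mathcal{C}(\mathcal{P}_j))=\mathbb{R}^{p_j}_+$. If $\mathbf{T}\in\mathcal{N}_{<\infty}$, then $\mathrm{NDrank}(\mathbf{T})=\mathrm{rank}_+\big((\otimes_{j=1}^k\mathbf{A}^{(j)})(\mathbf{T})\big)$.
   Context: For a finite poset $\mathcal{Q}$, the order cone $\mathcal{C}(\mathcal{Q})\subset\mathbb{R}^{\mathcal{Q}}$ is the set of functions $\mathbf{f}$ on $\mathcal{Q}$ with $f_x\ge0$ for all $x$ and $f_x\le f_y$ whenever $x\preceq y$. A cone in $\mathbb{R}^p$ is simplicial if it is the conical hull of $p$ linearly independent vectors. Tensors are elements of $\mathbb{R}^{\mathcal{P}_1\times\cdots\times\mathcal{P}_k}=\otimes_j\mathbb{R}^{p_j}$, with the product poset ordered componentwise. The nondecreasing rank $\mathrm{NDrank}(\mathbf{T})$ is the minimal $r$ such that $\mathbf{T}=\sum_{i=1}^r\otimes_{j=1}^k\mathbf{v}^{(ij)}$ with all $\mathbf{v}^{(ij)}\in\mathcal{C}(\mathcal{P}_j)$ ($\infty$ if no such decomposition exists), and $\mathcal{N}_{<\infty}$ is the set of tensors of finite nondecreasing rank. $\mathrm{rank}_+(\mathbf{S})$ is the minimal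 $r$ such that $\mathbf{S}=\sum_{i=1}^r\otimes_j\mathbf{v}^{(ij)}$ with all $\mathbf{v}^{(ij)}$ entrywise nonnegative. The linear map $\otimes_j\mathbf{A}^{(j)}$ is defined in coordinates by $[(\otimes_j\mathbf{A}^{(j)})(\mathbf{T})]_{j_1\dots j_k}=\sum_{i_1,\dots,i_k}A^{(1)}_{j_1i_1}\cdots A^{(k)}_{j_ki_k}T_{i_1\dots i_k}$. *)

(* Defs.v *)
From HB Require Import structures.
From mathcomp Require Import all_boot all_order all_algebra.
From mathcomp Require Import boolp reals.
Set Implicit Arguments. Unset Strict Implicit. Unset Printing Implicit Defensive.
Import Order.TTheory GRing.Theory Num.Theory.
Local Open Scope ring_scope.

(* minimum of a Prop-valued predicate on nat; None stands for +infinity *)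
Lemma exists_asbool (P : nat -> Prop) : (exists n, P n) -> exists n, `[< P n >].
Proof. by case=> n hn; exists n; apply/asboolP. Qed.

Definition min_option (P : nat -> Prop) : option nat :=
  match pselect (exists n, P n) with
  | left h => Some (ex_minn (exists_asbool h))
  | right _ => None
  end.

Section Defs.
Variable R : realType.

Definition is_poset (p : nat) (le : rel 'I_p) : Prop :=
  [/\ forall x, le x x,
      forall x y, le x y -> le y x -> x = y &
      forall x y z, le x y -> le y z -> le x z].

Definition order_cone (p : nat) (le : rel 'I_p) (f : 'I_p -> R) : Prop :=
  (forall x, 0 <= f x) /\ (forall x y, le x y -> f x <= f y).

Definition simplicial (p : nat) (C : ('I_p -> R) -> Prop) : Prop :=
  exists B : 'M[R]_p, row_free B /\
    forall f, C f <-> exists c : 'I_p -> R,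
      (forall i, 0 <= c i) /\ forall x, f x = \sum_(i < p) c i * B i x.

Definition mxapp (p : nat) (A : 'M[R]_p) (f : 'I_p -> R) : 'I_p -> R :=
  fun x => \sum_(l < p) A x l * f l.

Definition maps_onto_orthant (p : nat) (A : 'M[R]_p) (C : ('I_p -> R) -> Prop)
  : Prop :=
  forall y : 'I_p -> R,
    (exists f, C f /\ y = mxapp A f) <-> (forall x, 0 <= y x).

Definition tidx (k : nat) (p : 'I_k -> nat) := {dffun forall j : 'I_k, 'I_(p j)}.

Definition tensor (k : nat) (p : 'I_k -> nat) := tidx p -> R.

Definition decomp_with (k : nat) (p : 'I_k -> nat)
    (C : forall j : 'I_k, ('I_(p j) -> R) -> Prop) (T : tensor p) (r : nat)
  : Prop :=
  exists v : 'I_r -> forall j : 'I_k, 'I_(p j) -> R,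
    (forall i j, C j (v i j)) /\
    forall I : tidx p, T I = \sum_(i < r) \prod_(j < k) v i j (I j).

Definition NDrank (k : nat) (p : 'I_k -> nat) (le : forall j, rel 'I_(p j))
  (T : tensor p) : option nat :=
  min_option (decomp_with (fun j => order_cone (le j)) T).

Definition N_fin (k : nat) (p : 'I_k -> nat) (le : forall j, rel 'I_(p j))
  (T : tensor p) : Prop :=
  exists r, decomp_with (fun j => order_cone (le j)) T r.

Definition nonneg_vec (p : nat) (f : 'I_p -> R) : Prop := forall x, 0 <= f x.

Definition rank_plus (k : nat) (p : 'I_k -> nat) (S : tensor p) : option nat :=
  min_option (decomp_with (fun j => @nonneg_vec (p j)) S).

Definition tensor_map (k : nat) (p : 'I_k -> nat)
    (A : forall j : 'I_k, 'M[R]_(p j)) (T : tensor p) : tensor p :=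
  fun J => \sum_(I : tidx p) (\prod_(j < k) A j (J j) (I j)) * T I.

End Defs.

(* Main.v *)
Require Import Defs.
From HB Require Import structures.
From mathcomp Require Import all_boot all_order all_algebra.
From mathcomp Require Import boolp reals.
Import Order.TTheory GRing.Theory Num.Theory.
Local Open Scope ring_scope.

Lemma prod_sum_tidx (R : realType) k (p : 'I_k -> nat) (a : forall j, 'I_(p j) -> R) :
  \prod_(j < k) \sum_(x : 'I_(p j)) a j x = \sum_(I : tidx p) \prod_(j < k) a j (I j).
Proof.
pose G (t : {j : 'I_k & 'I_(p j)}) := a (tag t) (tagged t).
transitivity (\prod_(j < k) \sum_(t | tagged_with (fun j => 'I_(p j)) j t) G t).
  apply: eq_bigr => j _.
  rewrite -(@big_pred1_eq R 0 +%R _ j (fun j => \sum_(x : 'I_(p j)) a j x)).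
  rewrite (sig_big_dep _ (fun j (x: 'I_(p j)) => true) (fun j x => a j x)) /=.
  by apply: eq_bigl => t; rewrite andbT.
rewrite bigA_distr_big_dep big_sub.
rewrite (reindex (fun I : tidx p => to_family_tagged_with (fprod_of_dffun I))); last first.
  apply: onW_bij; exists (fun f => dffun_of_fprod (of_family_tagged_with f)) => I.
    by rewrite to_family_tagged_withK fprod_of_dffunK.
  by rewrite dffun_of_fprodK of_family_tagged_withK.
apply: eq_bigr => I _; apply: eq_bigr => j _ /=.
by rewrite /G /= ffunE.
Qed.
Section S.
Variables (R : realType) (k : nat) (p : 'I_k -> nat).

Lemma tmap_decomp (A : forall j : 'I_k, 'M[R]_(p j)) r
  (v : 'I_r -> forall j : 'I_k, 'I_(p j) -> R) (J : tidx p) :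
  tensor_map A (fun I => \sum_(i < r) \prod_(j < k) v i j (I j)) J =
  \sum_(i < r) \prod_(j < k) mxapp (A j) (v i j) (J j).
Proof.
rewrite /tensor_map.
under eq_bigr do rewrite big_distrr.
rewrite exchange_big; apply: eq_bigr => i _ /=.
rewrite /mxapp prod_sum_tidx; apply: eq_bigr => I _.
by rewrite -big_split.
Qed.

Lemma tmap_comp (A B : forall j : 'I_k, 'M[R]_(p j)) (T : tensor R p) J :
  tensor_map B (tensor_map A T) J = tensor_map (fun j => B j *m A j) T J.
Proof.
rewrite /tensor_map.
under eq_bigr do rewrite big_distrr.
rewrite exchange_big; apply: eq_bigr => I _ /=.
under eq_bigr do rewrite mulrA.
rewrite -big_distrl /=; congr (_ * _).
under eq_bigr do rewrite -big_split /=.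
rewrite -(@prod_sum_tidx R k p (fun j x => B j (J j) x * A j x (I j))); apply: eq_bigr => j _.
by rewrite mxE.
Qed.

Lemma tmap_id (T : tensor R p) J :
  tensor_map (fun j => 1%:M) T J = T J.
Proof.
rewrite /tensor_map (bigD1 J) //= [X in _ + X]big1.
  by rewrite addr0 big1 ?mul1r // => j _; rewrite mxE eqxx.
move=> I hI.
case: (boolP [forall j, J j == I j]) => [/forallP h|].
  have e : I = J by apply/ffunP => j; rewrite (eqP (h j)).
  by rewrite e eqxx in hI.
move/forallPn => [j hj].
by rewrite (bigD1 j) //= mxE (negbTE hj) mul0r mul0r.
Qed.

End S.
Theorem theorem4 (R : realType) (k : nat) (p : 'I_k -> nat)
  (le : forall j : 'I_k, rel 'I_(p j))
  (A : forall j : 'I_k, 'M[R]_(p j)) (T : tensor R p) :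
  (forall j, is_poset (le j)) ->
  (forall j, simplicial (order_cone (R := R) (le j))) ->
  (forall j, A j \in unitmx) ->
  (forall j, maps_onto_orthant (A j) (order_cone (le j))) ->
  N_fin le T ->
  NDrank le T = rank_plus (tensor_map A T).
Proof.
move=> _ _ hU hO _.
rewrite /NDrank /rank_plus; congr min_option.
apply: funext => r; apply: propext; split.
  case=> v [hv hT].
  exists (fun i j => mxapp (A j) (v i j)); split.
    by move=> i j; apply/(hO j); exists (v i j).
  move=> J; rewrite -tmap_decomp /tensor_map.
  by apply: eq_bigr => I _; rewrite hT.
case=> w [hw hT].
have H : forall i j, exists f, order_cone (le j) f /\ w i j = mxapp (A j) f.
  by move=> i j; apply/(hO j)/hw.
pose v i j := sval (cid (H i j)).
have hv i j : order_cone (le j) (v i j) /\ w i j = mxapp (A j) (v i j).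
  exact: svalP (cid (H i j)).
exists v; split; first by move=> i j; case: (hv i j).
move=> I.
pose T' := fun I => \sum_(i < r) \prod_(j < k) v i j (I j).
have e : forall J, tensor_map A T J = tensor_map A T' J.
  move=> J; rewrite hT tmap_decomp; apply: eq_bigr => i _; apply: eq_bigr => j _.
  by case: (hv i j) => _ ->.
have key S : S I = tensor_map (fun j => invmx (A j)) (tensor_map A S) I.
  rewrite tmap_comp -{1}(@tmap_id R k p S) /tensor_map; apply: eq_bigr => J _.
  by congr (_ * _); apply: eq_bigr => j _; rewrite mulVmx.
rewrite key -[RHS]/(T' I) (key T') /tensor_map; apply: eq_bigr => J _.
by rewrite -/(tensor_map A T J) e.
Qed.
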